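(* Let $\gamma$ be a gauge on $\mathbb{R}^d$ with skewness $\sigma$. Let $A\subset\mathbb{R}^d$ be finite with positive weights summing to $1$, let $C\subseteq A$ with $w_C<\frac{1}{1+\sigma}$, and let $D=A\setminus C$. Let $C_c$ be obtained by moving the points of $C$ to arbitrary positions (keeping their weights), and let $x$ be a Fermat–Weber point of the weighted set $D\cup C_c$. Then $x\in\mathrm{EH}_\gamma(D)$.
   Context: A gauge $\gamma$ on $\mathbb{R}^d$ is the Minkowski functional of a convex compact set $B_\gamma$ with the origin in its interior (not necessarily symmetric); $\gamma^\circ(p)=\max\{\langle p,x\rangle:\gamma(x)=1\}$ is the dual gauge with unit ball $B_{\gamma^\circ}$; the skewness is $\sigma=\sup_{x\neq0}\gamma(x)/\gamma(-x)$. A Fermat–Weber point of a finite positively weighted set is a minimizer of $x\mapsto\sum_a w_a\gamma(x-a)$. For $p\in B_{\gamma^\circ}$ define $N(p)$ as follows: if $\gamma^\circ(p)=1$, $N(p)$ is the convex cone $\mathbb{R}_{\ge0}F(p)$ generated by the exposed face $F(p)=\{x\in B_\gamma:\langle p,x\rangle=1\}$ (equivalently $\mathbb{R}_{\ge0}\partial\gamma^\circ(p)$); if $\gamma^\circ(p)<1$, $N(p)=\{0\}$. For a finite set $S$ and a family $\pi=(p_s)_{s\in S}$ of points of $B_{\gamma^\circ}$, let $C_\pi=\bigcap_{s\in S}(s+N(p_s))$; a nonempty such $C_\pi$ is an elementary convex set for $S$. The elementary hull $\mathrm{EH}_\gamma(S)$ is the union of all bounded elementary convex sets for $S$. *)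

(* Defs.v *)
From HB Require Import structures.
From mathcomp Require Import all_boot all_order all_algebra.
From mathcomp Require Import all_classical all_reals all_analysis.
Set Implicit Arguments. Unset Strict Implicit. Unset Printing Implicit Defensive.
Import Order.TTheory GRing.Theory Num.Theory.
Import numFieldNormedType.Exports.
Local Open Scope classical_set_scope.
Local Open Scope ring_scope.

Section Gauges.
Variables (R : realType) (d : nat).
Notation V := 'rV[R]_d.

Definition dotp (p x : V) : R := \sum_(i < d) p 0 i * x 0 i.

Definition gauge_body (B : set V) : Prop :=
  [/\ (forall x y (t : R), B x -> B y -> 0 <= t <= 1 -> B (t *: x + (1 - t) *: y)),
      compact B & nbhs (0 : V) B].

Definition gauge (B : set V) (x : V) : R :=
  inf [set t : R | 0 < t /\ exists2 b, B b & x = t *: b].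

Definition gball (B : set V) : set V := [set x | gauge B x <= 1].

Definition dual_gauge (B : set V) (p : V) : R :=
  sup [set dotp p x | x in [set x | gauge B x = 1]].

Definition dual_ball (B : set V) : set V := [set p | dual_gauge B p <= 1].

Definition skewness (B : set V) : R :=
  sup [set gauge B x / gauge B (- x) | x in [set x : V | x != 0]].

Definition exposed_face (B : set V) (p : V) : set V :=
  [set x | gball B x /\ dotp p x = 1].

Definition Ncone (B : set V) (p : V) : set V :=
  if `[< dual_gauge B p = 1 >] then
    [set y | exists t : R, exists2 z, exposed_face B p z & 0 <= t /\ y = t *: z]
  else [set 0].

Definition elem_set (B : set V) (S : set V) (pi : V -> V) : set V :=
  [set x | forall s, S s -> Ncone B (pi s) (x - s)].

Definition elem_hull (B : set V) (S : set V) : set V :=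
  [set x | exists pi : V -> V,
      (forall s, S s -> dual_ball B (pi s)) /\
      elem_set B S pi x /\ bounded_set (elem_set B S pi)].

Definition fermat_weber (B : set V) (I : finType) (pts : I -> V) (w : I -> R)
  (x : V) : Prop :=
  forall y : V, \sum_i w i * gauge B (x - pts i) <= \sum_i w i * gauge B (y - pts i).

End Gauges.

(* Main.v *)
Require Import Defs.
From HB Require Import structures.
From mathcomp Require Import all_boot all_order all_algebra.
From mathcomp Require Import all_classical all_reals all_analysis.
From mathcomp Require Import ring lra.
Set Implicit Arguments. Unset Strict Implicit. Unset Printing Implicit Defensive.
Import Order.TTheory GRing.Theory Num.Theory.
Import numFieldNormedType.Exports.
Local Open Scope classical_set_scope.
Local Open Scope ring_scope.
Section RealAux.
Variable R : realType.

Lemma inf_le_el (E : set R) y : has_lbound E -> E y -> inf E <= y.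
Proof. by move=> hl Ey; apply: ge_inf. Qed.

Lemma le_inf_all (E : set R) x : E !=set0 -> (forall y, E y -> x <= y) -> x <= inf E.
Proof. by move=> ne h; apply: lb_le_inf. Qed.

Lemma sup_ge_el (E : set R) y : has_ubound E -> E y -> y <= sup E.
Proof. by move=> hu Ey; apply: ub_le_sup. Qed.

Lemma sup_le_all (E : set R) x : 0 <= x -> (forall y, E y -> y <= x) -> sup E <= x.
Proof.
move=> x0 h; have [ne|e] := pselect (E !=set0); first by apply: ge_sup.
have -> : E = set0 by apply/seteqP; split => // z Ez; apply: e; exists z.
by rewrite sup0.
Qed.

End RealAux.

Section Gauge.
Variables (R : realType) (d : nat) (B : set 'rV[R]_d).
Hypothesis hB : gauge_body B.
Local Notation V := 'rV[R]_d.
Local Notation g := (gauge B).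

Lemma convB (x y : V) (t : R) : B x -> B y -> 0 <= t <= 1 -> B (t *: x + (1 - t) *: y).
Proof. by case: hB => h _ _; apply: h. Qed.

Lemma ballB : exists2 r : R, 0 < r & forall x : V, `|x| < r -> B x.
Proof.
case: hB => _ _ /nbhs_ballP [r r0 Hr]; exists r => // x hx.
by apply: Hr; rewrite -ball_normE /= sub0r normrN.
Qed.

Lemma bndB : exists2 M : R, 0 < M & forall x : V, B x -> `|x| <= M.
Proof.
case: hB => _ /compact_bounded [M [_ HM]] _.
exists (`|M| + 1) => [|x Bx]; first by rewrite ltr_pwDr // normr_ge0.
by apply: HM => //; rewrite (le_lt_trans (ler_norm M)) // ltrDl.
Qed.

Lemma B0 : B 0.
Proof. by case: ballB => r r0 h; apply: h; rewrite normr0. Qed.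

Definition Sg (x : V) := [set t : R | 0 < t /\ exists2 b, B b & x = t *: b].

Lemma gaugeE x : g x = inf (Sg x). Proof. by []. Qed.

Lemma Sg_lb x : has_lbound (Sg x).
Proof. by exists 0 => t [/ltW]. Qed.

Lemma Sg_mem x t r : 0 < r -> (forall y : V, `|y| < r -> B y) -> 0 < t -> `|x| < t * r -> Sg x t.
Proof.
move=> r0 hr t0 hx; split => //; exists (t^-1 *: x); last by rewrite scalerA divff ?scale1r // gt_eqF.
apply: hr; rewrite normrZ ger0_norm ?invr_ge0 ?(ltW t0) //.
by rewrite ltr_pdivrMl.
Qed.

Lemma Sg_ne x : Sg x !=set0.
Proof.
case: ballB => r r0 hr; exists ((`|x| + 1) / r); apply: Sg_mem hr _ _ => //.
  by rewrite divr_gt0 // ltr_pwDr.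
by rewrite divfK ?gt_eqF // ltrDl.
Qed.

Lemma g_lb x t : Sg x t -> g x <= t.
Proof. by move=> h; apply: inf_le_el (Sg_lb x) h. Qed.

Lemma g_ge0 x : 0 <= g x.
Proof. by apply: le_inf_all (Sg_ne x) _ => t [/ltW]. Qed.

Lemma norm_le_g : exists2 M : R, 0 < M & forall x : V, `|x| <= M * g x.
Proof.
case: bndB => M M0 hM; exists M => // x.
rewrite -ler_pdivrMl //; apply: le_inf_all (Sg_ne x) _ => t [t0 [b Bb ->]].
rewrite normrZ (ger0_norm (ltW t0)) ler_pdivrMl // [t * _]mulrC ler_wpM2r ?(ltW t0) //.
exact: hM.
Qed.

Lemma gZle x s : 0 < s -> g (s *: x) <= s * g x.
Proof.
move=> s0; rewrite mulrC -ler_pdivrMr //.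
apply: le_inf_all (Sg_ne x) _ => t [t0 [b Bb ->]].
rewrite ler_pdivrMr //; apply: g_lb; split; first by rewrite mulr_gt0.
by exists b => //; rewrite scalerA mulrC.
Qed.

Lemma gZ x s : 0 < s -> g (s *: x) = s * g x.
Proof.
move=> s0; apply/le_anti; rewrite gZle //=.
have := gZle (s *: x) (s:=s^-1) ltac:(by rewrite invr_gt0).
by rewrite scalerA mulVf ?gt_eqF // scale1r ler_pdivlMl.
Qed.

Lemma g0 : g 0 = 0.
Proof.
have := gZ 0 (s:=2) (ltr0Sn R 1); rewrite scaler0 => h; lra.
Qed.

Lemma gZ0 x s : 0 <= s -> g (s *: x) = s * g x.
Proof.
rewrite le_eqVlt => /orP [/eqP <-|]; last exact: gZ.
by rewrite scale0r g0 mul0r.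
Qed.

Lemma gD x y : g (x + y) <= g x + g y.
Proof.
rewrite -lerBlDr; apply: le_inf_all (Sg_ne x) _ => t1 [t10 [b1 Bb1 ->]].
rewrite lerBlDr [t1 + _]addrC -lerBlDr.
apply: le_inf_all (Sg_ne y) _ => t2 [t20 [b2 Bb2 ->]].
rewrite lerBlDr [t2 + _]addrC; apply: g_lb.
have tp : 0 < t1 + t2 by rewrite addr_gt0.
split => //; exists ((t1 / (t1 + t2)) *: b1 + (1 - t1 / (t1 + t2)) *: b2).
  apply: convB => //; rewrite divr_ge0 ?(ltW t10) ?(ltW tp) //= ler_pdivrMr // mul1r lerDl (ltW t20) //.
have -> : 1 - t1 / (t1 + t2) = t2 / (t1 + t2).
  by field; rewrite gt_eqF.
by rewrite scalerDr !scalerA !mulrA !(mulrC (t1 + t2)) !mulfK // gt_eqF.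
Qed.

Lemma g_le_norm : exists2 r : R, 0 < r & forall x : V, g x <= `|x| / r.
Proof.
case: ballB => r r0 hr; exists (r / 2) => [|x]; first by rewrite divr_gt0.
have [->|xn0] := eqVneq x 0; first by rewrite g0 normr0 mul0r.
apply: g_lb; apply: Sg_mem hr _ _ => //.
  by rewrite divr_gt0 ?normr_gt0 // divr_gt0.
rewrite invf_div mulrA divfK ?gt_eqF // -[X in X < _]mulr1 ltr_pM2l ?normr_gt0 //.
by rewrite ltr1n.
Qed.

Lemma g_pos x : x != 0 -> 0 < g x.
Proof.
case: norm_le_g => M M0 h xn0; have := h x.
rewrite -ler_pdivrMl // => h2; apply: lt_le_trans h2.
by rewrite mulr_gt0 ?invr_gt0 ?normr_gt0.
Qed.

Lemma g_tri x y : g x <= g (x - y) + g y.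
Proof. by have := gD (x - y) y; rewrite subrK. Qed.

End Gauge.

Section Dot.
Variables (R : realType) (d : nat).
Local Notation V := 'rV[R]_d.

Lemma dotpDr (p x y : V) : dotp p (x + y) = dotp p x + dotp p y.
Proof. by rewrite /dotp -big_split; apply: eq_bigr => i _; rewrite mxE mulrDr. Qed.

Lemma dotpZr (p x : V) (t : R) : dotp p (t *: x) = t * dotp p x.
Proof. by rewrite /dotp mulr_sumr; apply: eq_bigr => i _; rewrite mxE mulrCA. Qed.

Lemma dotpNr (p x : V) : dotp p (- x) = - dotp p x.
Proof. by rewrite -scaleN1r dotpZr mulN1r. Qed.

Lemma dotpBr (p x y : V) : dotp p (x - y) = dotp p x - dotp p y.
Proof. by rewrite dotpDr dotpNr. Qed.

Lemma dotpZl (p x : V) (t : R) : dotp (t *: p) x = t * dotp p x.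
Proof. by rewrite /dotp mulr_sumr; apply: eq_bigr => i _; rewrite mxE mulrA. Qed.

Lemma dotp0l (x : V) : dotp 0 x = 0.
Proof. by rewrite /dotp big1 // => i _; rewrite mxE mul0r. Qed.

Lemma dotp0r (p : V) : dotp p 0 = 0.
Proof. by rewrite /dotp big1 // => i _; rewrite mxE mulr0. Qed.

End Dot.

Section Dual.
Variables (R : realType) (d : nat) (B : set 'rV[R]_d).
Hypothesis hB : gauge_body B.
Local Notation V := 'rV[R]_d.
Local Notation g := (gauge B).

Lemma dual_le1 (p : V) : (forall v, dotp p v <= g v) -> dual_gauge B p <= 1.
Proof.
move=> h; apply: sup_le_all => // _ [v /= gv1 <-]; by rewrite -gv1.
Qed.

Lemma dual_eq1 (p z : V) : (forall v, dotp p v <= g v) -> g z = 1 -> dotp p z = 1 ->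
  dual_gauge B p = 1.
Proof.
move=> h gz pz; apply/le_anti; rewrite dual_le1 //=.
rewrite /dual_gauge; apply: sup_ge_el; last by exists z.
by exists 1 => _ [v /= gv1 <-]; rewrite -gv1.
Qed.

Lemma dual0 : dual_gauge B 0 = 0.
Proof.
apply/le_anti; apply/andP; split.
  by apply: sup_le_all => // _ [v _ <-]; rewrite dotp0l.
rewrite /dual_gauge; have [ne|e] := pselect ([set dotp 0 x | x in [set x | g x = 1]] !=set0).
  case: ne => y [v gv _]; rewrite -(dotp0l v); apply: sup_ge_el; last by exists v.
  by exists 0 => _ [u _ <-]; rewrite dotp0l.
have -> : [set dotp 0 x | x in [set x | g x = 1]] = set0.
  by apply/seteqP; split => // z Ez; apply: e; exists z.
by rewrite sup0.
Qed.

Lemma Ncone0 (y : V) : Ncone B 0 y -> y = 0.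
Proof. by rewrite /Ncone dual0 asboolF // => /eqP; rewrite eq_sym oner_eq0. Qed.

Lemma Ncone0_0 : Ncone B 0 0.
Proof. by rewrite /Ncone dual0 asboolF // => /eqP; rewrite eq_sym oner_eq0. Qed.

End Dual.

Section HBsec.
Variables (R : realType) (E : lmodType R).

Definition sublin (phi : E -> R) :=
  (forall u v, phi (u + v) <= phi u + phi v) /\
  (forall s u, 0 < s -> phi (s *: u) <= s * phi u).

Lemma sublin0 phi : sublin phi -> phi 0 = 0.
Proof.
case=> hD hZ; have h1 := hD 0 0; have h2 := hZ (2^-1) 0 ltac:(by rewrite invr_gt0).
rewrite addr0 in h1; rewrite scaler0 in h2; apply/le_anti/andP; split; last lra.
have : phi 0 <= 0 by nra. by [].
Qed.

Lemma sublinZ phi s u : sublin phi -> 0 <= s -> phi (s *: u) = s * phi u.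
Proof.
move=> hp; have [hD hZ] := hp; rewrite le_eqVlt => /orP [/eqP <-|s0].
  by rewrite scale0r mul0r sublin0.
apply/le_anti; rewrite hZ //=.
have := hZ s^-1 (s *: u) ltac:(by rewrite invr_gt0).
by rewrite scalerA mulVf ?gt_eqF // scale1r ler_pdivlMl.
Qed.

Lemma sublinN phi u : sublin phi -> - phi (- u) <= phi u.
Proof.
move=> hp; have := hp.1 u (- u); rewrite subrr sublin0 //; lra.
Qed.

Section Step.
Variables (phi : E -> R) (hp : sublin phi) (v : E).
Let c := phi v.
Definition psi (u : E) := inf [set phi (u + t *: v) - t * c | t in [set: R]].

Lemma psi_lb_el u t : - phi (- u) <= phi (u + t *: v) - t * c.
Proof.
have [hD hZ] := hp; have [t0|t0] := leP 0 t.
  have := hD (u + t *: v) (- u).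
  have -> : u + t *: v + - u = t *: v by rewrite addrAC subrr add0r.
  rewrite sublinZ // /c; lra.
have := hD (u + t *: v + - u) ((- t) *: v).
have -> : u + t *: v + - u + (- t) *: v = 0 by rewrite [u + _ + - u]addrAC subrr add0r scaleNr subrr.
rewrite sublin0 // (sublinZ _ hp) /c; last lra.
have := hD (u + t *: v) (- u); lra.
Qed.

Lemma psi_has_lb u : has_lbound [set phi (u + t *: v) - t * c | t in [set: R]].
Proof. by exists (- phi (- u)) => _ [t _ <-]; apply: psi_lb_el. Qed.

Lemma psi_le u t : psi u <= phi (u + t *: v) - t * c.
Proof. by apply: inf_le_el (psi_has_lb u) _; exists t. Qed.

Lemma psi_ne u : [set phi (u + t *: v) - t * c | t in [set: R]] !=set0.
Proof. by exists (phi (u + 0 *: v) - 0 * c); exists 0. Qed.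

Lemma psi_sublin : sublin psi.
Proof.
have [hD hZ] := hp; split.
  move=> u1 u2; rewrite -lerBlDr; apply: le_inf_all (psi_ne u1) _ => _ [t1 _ <-].
  rewrite lerBlDr [_ + psi u2]addrC -lerBlDr.
  apply: le_inf_all (psi_ne u2) _ => _ [t2 _ <-].
  rewrite lerBlDr; apply: le_trans (psi_le (u1 + u2) (t1 + t2)) _.
  have := hD (u1 + t1 *: v) (u2 + t2 *: v).
  have -> : u1 + t1 *: v + (u2 + t2 *: v) = u1 + u2 + (t1 + t2) *: v.
    by rewrite scalerDl; rewrite addrACA.
  lra.
move=> s u s0; rewrite mulrC -ler_pdivrMr //; apply: le_inf_all (psi_ne u) _ => _ [t _ <-].
rewrite ler_pdivrMr //; apply: le_trans (psi_le (s *: u) (s * t)) _.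
rewrite -scalerA -scalerDr sublinZ ?(ltW s0) //; lra.
Qed.

End Step.

Lemma HB_seq (K : eqType) (v : K -> E) (s : seq K) : uniq s ->
  forall phi, sublin phi -> exists c : K -> R, forall lam : K -> R,
    \sum_(k <- s) lam k * c k <= phi (\sum_(k <- s) lam k *: v k).
Proof.
elim: s => [|k0 s IH] /= us phi hp.
  by exists (fun _ => 0) => lam; rewrite !big_nil sublin0.
case/andP: us => k0s us.
have [c' hc'] := IH us _ (psi_sublin hp (v k0)).
exists (fun k => if k == k0 then phi (v k0) else c' k) => lam.
rewrite !big_cons eqxx.
have -> : \sum_(j <- s) lam j * (if j == k0 then phi (v k0) else c' j) = \sum_(j <- s) lam j * c' j.
  apply: eq_big_seq => j js; case: eqP => // ej; by move: k0s; rewrite -ej js.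
have := hc' lam; set U := \sum_(j <- s) lam j *: v j => h.
have := psi_le hp (v k0) U (lam k0); rewrite [lam k0 *: _ + _]addrC; lra.
Qed.

End HBsec.

Section Prod.
Variables (R : realType) (d : nat) (B : set 'rV[R]_d).
Hypothesis hB : gauge_body B.
Local Notation V := 'rV[R]_d.
Local Notation g := (gauge B).
Variables (I : finType) (w : I -> R) (z : I -> V).
Hypothesis hw : forall i, 0 < w i.
Local Notation E := {ffun I -> V}.

Definition Ff (U : E) := \sum_i w i * g (z i + U i).
Hypothesis hFW : forall v : V, Ff 0 <= Ff [ffun _ => v].

Lemma gconv (a b : V) l : 0 <= l <= 1 -> g (l *: a + (1 - l) *: b) <= l * g a + (1 - l) * g b.
Proof.
case/andP=> l0 l1; apply: le_trans (gD hB _ _) _.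
by rewrite !(gZ0 hB) // subr_ge0.
Qed.

Lemma F_conv (U U' : E) l : 0 <= l <= 1 -> Ff (l *: U + (1 - l) *: U') <= l * Ff U + (1 - l) * Ff U'.
Proof.
move=> hl; rewrite /Ff !mulr_sumr -big_split /=; apply: ler_sum => i _.
rewrite !ffunE.
have -> : z i + (l *: U i + (1 - l) *: U' i) = l *: (z i + U i) + (1 - l) *: (z i + U' i).
  by rewrite !scalerDr addrACA -scalerDl [l + _]addrC subrK scale1r.
rewrite mulrCA (mulrCA (1 - l)) -mulrDr ler_wpM2l ?(ltW (hw i)) //.
exact: gconv.
Qed.

Definition Qf t (U : E) := (Ff (t *: U) - Ff 0) / t.

Lemma Q_mono s t X : 0 < s -> s <= t -> Qf s X <= Qf t X.
Proof.
move=> s0 st; have t0 : 0 < t := lt_le_trans s0 st.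
have hq : 0 <= s / t <= 1 by rewrite divr_ge0 ?(ltW s0) ?(ltW t0) //= ler_pdivrMr // mul1r.
have := F_conv (t *: X) 0 hq; rewrite scaler0 addr0 scalerA divfK ?gt_eqF //.
rewrite /Qf ler_pdivrMr // => h.
have -> : (Ff (t *: X) - Ff 0) / t * s = s / t * Ff (t *: X) - s / t * Ff 0.
  by field; rewrite gt_eqF.
move: h; set q := s / t; lra.
Qed.

Lemma Q_homog t s X : 0 < t -> 0 < s -> Qf t (s *: X) = s * Qf (t * s) X.
Proof.
move=> t0 s0; rewrite /Qf scalerA; field.
by rewrite !gt_eqF // mulr_gt0.
Qed.

Lemma Q_sub t X Y : 0 < t -> Qf t (X + Y) <= Qf (2 * t) X + Qf (2 * t) Y.
Proof.
move=> t0; have hq : 0 <= (2 : R)^-1 <= 1.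
  by lra.
have := F_conv ((2 * t) *: X) ((2 * t) *: Y) hq.
have -> : 1 - 2^-1 = 2^-1 :> R by field.
have -> : 2^-1 *: (2 * t *: X) + 2^-1 *: (2 * t *: Y) = t *: (X + Y) :> E.
  by rewrite -scalerDr -scalerDr scalerA mulrA mulVf ?pnatr_eq0 // mul1r.
rewrite /Qf => h.
have t2 : 0 < 2 * t by rewrite mulr_gt0.
rewrite ler_pdivrMr //.
have -> : ((Ff (2 * t *: X) - Ff 0) / (2 * t) + (Ff (2 * t *: Y) - Ff 0) / (2 * t)) * t
  = 2^-1 * Ff (2 * t *: X) + 2^-1 * Ff (2 * t *: Y) - Ff 0.
  by field; rewrite gt_eqF.
lra.
Qed.

Definition Gf (U : E) := \sum_i w i * g (U i).

Lemma Q_lb t U (v : V) : 0 < t -> - Gf (- U) <= Qf t (U + [ffun _ => v]).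
Proof.
move=> t0; rewrite /Qf ler_pdivlMr //.
have h1 := hFW (t *: v).
have h2 : Ff [ffun _ => t *: v] - t * Gf (- U) <= Ff (t *: (U + [ffun _ => v])).
  rewrite /Ff /Gf mulr_sumr -sumrB; apply: ler_sum => i _.
  rewrite !ffunE; have := g_tri hB (z i + t *: v) (- (t *: U i)).
  rewrite opprK -scalerN (gZ0 hB (- U i)) ?(ltW t0) // -addrA -scalerDr [v + _]addrC => h.
  rewrite (mulrCA t) -mulrBr ler_wpM2l ?(ltW (hw i)) //; lra.
rewrite mulNr; lra.
Qed.

Definition Phi (U : E) :=
  inf [set Qf p.1 (U + [ffun _ => p.2]) | p in [set p : R * V | 0 < p.1]].

Lemma Phi_ne U : [set Qf p.1 (U + [ffun _ => p.2]) | p in [set p : R * V | 0 < p.1]] !=set0.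
Proof. exists (Qf 1 (U + [ffun _ => 0])); exists (1, 0) => //=. Qed.

Lemma Phi_le t U (v : V) : 0 < t -> Phi U <= Qf t (U + [ffun _ => v]).
Proof.
move=> t0; apply: inf_le_el; last by exists (t, v).
by exists (- Gf (- U)) => _ [p /= p0 <-]; apply: Q_lb.
Qed.

Lemma diagD (v1 v2 : V) : [ffun _ => v1 + v2] = [ffun _ => v1] + [ffun _ => v2] :> E.
Proof. by apply/ffunP => i; rewrite !ffunE. Qed.

Lemma diagZ s (v : V) : [ffun _ => s *: v] = s *: [ffun _ => v] :> E.
Proof. by apply/ffunP => i; rewrite !ffunE. Qed.

Lemma Phi_sublin : sublin Phi.
Proof.
split.
  move=> U1 U2; rewrite -lerBlDr; apply: le_inf_all (Phi_ne U1) _ => _ [[t1 v1] /= t10 <-].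
  rewrite lerBlDr [_ + Phi U2]addrC -lerBlDr.
  apply: le_inf_all (Phi_ne U2) _ => _ [[t2 v2] /= t20 <-].
  rewrite lerBlDr.
  set t := Num.min t1 t2 / 2.
  have t0 : 0 < t by rewrite divr_gt0 // lt_min t10 t20.
  have t2t : 2 * t = Num.min t1 t2 by rewrite /t mulrC divfK ?pnatr_eq0.
  apply: le_trans (Phi_le (U1+U2) (v1 + v2) t0) _.
  have -> : U1 + U2 + [ffun=> v1 + v2] = (U1 + [ffun=> v1]) + (U2 + [ffun=> v2]).
    by rewrite diagD addrACA.
  apply: le_trans (Q_sub _ _ t0) _; rewrite t2t.
  have m0 : 0 < Num.min t1 t2 by rewrite lt_min t10 t20.
  have h1 := Q_mono (U1 + [ffun=> v1]) m0 (ltac:(by rewrite ge_min lexx) : Num.min t1 t2 <= t1).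
  have h2 := Q_mono (U2 + [ffun=> v2]) m0 (ltac:(by rewrite ge_min lexx orbT) : Num.min t1 t2 <= t2).
  lra.
move=> s U s0; rewrite mulrC -ler_pdivrMr //.
apply: le_inf_all (Phi_ne U) _ => _ [[t v] /= t0 <-].
rewrite ler_pdivrMr //.
have ts0 : 0 < t / s by rewrite divr_gt0.
apply: le_trans (Phi_le (s *: U) (s *: v) ts0) _.
by rewrite diagZ -scalerDr Q_homog // divfK ?gt_eqF // mulrC.
Qed.

End Prod.

Section Extract.
Variables (R : realType) (d : nat) (B : set 'rV[R]_d).
Hypothesis hB : gauge_body B.
Local Notation V := 'rV[R]_d.
Local Notation g := (gauge B).
Variables (I : finType) (w : I -> R) (z : I -> V).
Hypothesis hw : forall i, 0 < w i.
Local Notation E := {ffun I -> V}.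
Hypothesis hFW : forall v : V, Ff B w z 0 <= Ff B w z [ffun _ => v].

Local Notation K := (I * 'I_d)%type.

Definition ev (k : K) : E := [ffun i => if i == k.1 then delta_mx 0 k.2 else 0].

Lemma decomp (U : E) : \sum_(k <- index_enum K) U k.1 0 k.2 *: ev k = U.
Proof.
apply/ffunP => i; apply/matrixP => i0 j; rewrite sum_ffunE summxE.
rewrite (eq_bigr (fun k => if k == (i, j) then U i 0 j else 0)).
  by rewrite -big_mkcond big_pred1_eq ord1.
move=> [k1 k2] _; rewrite !ffunE mxE /=.
case: (eqVneq i k1) => [<-|ne].
  rewrite mxE ord1 eqxx /= xpair_eqE eqxx /=.
  by case: (eqVneq k2 j) => [->|_]; rewrite ?eqxx ?mulr1 ?mulr0 // eq_sym; case: eqP.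
rewrite mxE mulr0 xpair_eqE; case: eqVneq => //= e; by rewrite e eqxx in ne.
Qed.

Lemma subgrad_exists : exists P : I -> V,
  (forall i u, dotp (P i) u <= w i * (g (z i + u) - g (z i))) /\
  (forall v, \sum_i dotp (P i) v = 0).
Proof.
have [c hc] := HB_seq ev (index_enum_uniq K) (Phi_sublin hB hw hFW).
pose P i : V := \row_j c (i, j).
have hL : forall U : E, \sum_i dotp (P i) (U i) <= Phi B w z U.
  move=> U; have := hc (fun k => U k.1 0 k.2); rewrite decomp.
  suff -> : \sum_i dotp (P i) (U i) = \sum_(k <- index_enum K) U k.1 0 k.2 * c k by [].
  rewrite (eq_bigr (fun i => \sum_j U i 0 j * c (i, j))); last first.
    by move=> i _; rewrite /dotp; apply: eq_bigr => j _; rewrite mxE mulrC.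
  by rewrite pair_bigA; apply: eq_bigr => -[i j].
have hQ1 : forall X : E, Qf B w z 1 X = Ff B w z X - Ff B w z 0.
  by move=> X; rewrite /Qf scale1r divr1.
exists P; split.
  move=> i u; pose U : E := [ffun i' => if i' == i then u else 0].
  have := hL U; rewrite (bigD1 i) //= big1 => [|i' ne]; last by rewrite ffunE (negbTE ne) dotp0r.
  rewrite ffunE eqxx addr0 => h; apply: le_trans h _.
  apply: le_trans (Phi_le hB hw hFW U 0 ltr01) _.
  have -> : U + [ffun=> 0] = U by apply/ffunP => k; rewrite !ffunE addr0.
  rewrite hQ1 /Ff -sumrB (bigD1 i) //= big1 => [|k ne]; last first.
    by rewrite /U !ffunE (negbTE ne) addr0 subrr.
  by rewrite /U !ffunE eqxx !addr0 -mulrBr.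
move=> v.
have h1 : forall v, \sum_i dotp (P i) v <= 0.
  move=> v'; have := hL [ffun _ => v']; rewrite (eq_bigr (fun i => dotp (P i) v')) => [|i _]; last by rewrite ffunE.
  move=> h; apply: le_trans h _; apply: le_trans (Phi_le hB hw hFW _ (- v') ltr01) _.
  rewrite hQ1 -diagD subrr.
  have -> : [ffun=> 0] = 0 :> E by apply/ffunP => i; rewrite !ffunE.
  by rewrite subrr.
apply/le_anti; rewrite h1 /=.
have := h1 (- v); rewrite (eq_bigr (fun i => - dotp (P i) v)) => [|i _]; last by rewrite dotpNr.
rewrite sumrN; lra.
Qed.

End Extract.

Section Final.
Variables (R : realType) (d : nat) (B : set 'rV[R]_d).
Hypothesis hB : gauge_body B.
Local Notation V := 'rV[R]_d.
Local Notation g := (gauge B).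

Lemma ncone_le (p y : V) : dual_gauge B p = 1 -> Ncone B p y -> g y <= dotp p y.
Proof.
move=> h1; rewrite /Ncone h1 asboolT // => -[t [zz [gzz dz] [t0 ->]]].
rewrite dotpZr dz mulr1 (gZ0 hB) //; rewrite /gball /= in gzz.
by rewrite -[X in _ <= X]mulr1 ler_wpM2l.
Qed.

Lemma g_skew (y : V) : g (- y) <= skewness B * g y.
Proof.
have [->|yn0] := eqVneq y 0; first by rewrite oppr0 (g0 hB) mulr0.
have gy := g_pos hB yn0.
rewrite -ler_pdivrMr //; apply: sup_ge_el; last by exists (- y) => /=; [rewrite oppr_eq0 | rewrite opprK].
case: (g_le_norm hB) => r r0 hr; case: (norm_le_g hB) => M M0 hM.
exists (M / r) => _ [x /= xn0 <-].
have gx := g_pos hB (ltac:(by rewrite oppr_eq0) : - x != 0).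
rewrite ler_pdivrMr //; apply: le_trans (hr x) _.
rewrite mulrAC ler_pM2r ?invr_gt0 //; by have := hM (- x); rewrite normrN.
Qed.

Lemma bnd_of (A : set V) M : (forall y, A y -> `|y| <= M) -> bounded_set A.
Proof.
move=> h; exists M; split; first by rewrite num_real.
by move=> M' hM' y Ay; apply: le_trans (h y Ay) (ltW hM').
Qed.

End Final.

Theorem mainTheorem7 (R : realType) (d : nat) (B : set 'rV[R]_d)
  (I : finType) (a : I -> 'rV[R]_d) (w : I -> R) (C : {set I})
  (c : I -> 'rV[R]_d) (x : 'rV[R]_d) :
  gauge_body B ->
  injective a ->
  (forall i, 0 < w i) ->
  \sum_i w i = 1 ->
  \sum_(i in C) w i < 1 / (1 + skewness B) ->
  fermat_weber B (fun i => if i \in C then c i else a i) w x ->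
  elem_hull B (a @` [set i | i \notin C]) x.
Proof.
move=> hB ainj hw hw1 hC hFW.
pose pts i := if i \in C then c i else a i.
pose z i := x - pts i.
have hFW' : forall v, Ff B w z 0 <= Ff B w z [ffun _ => v].
  move=> v.
  have -> : Ff B w z 0 = \sum_i w i * gauge B (x - pts i).
    by apply: eq_bigr => i _; rewrite ffunE addr0.
  have -> : Ff B w z [ffun _ => v] = \sum_i w i * gauge B ((x + v) - pts i).
    by apply: eq_bigr => i _; rewrite ffunE /z addrAC.
  exact: hFW (x + v).
have [P [hP1 hP2]] := subgrad_exists hB hw hFW'.
pose p i := (w i)^-1 *: P i.
have hp1 : forall i u, dotp (p i) u <= gauge B (z i + u) - gauge B (z i).
  by move=> i u; rewrite /p dotpZl ler_pdivrMl.
have hsub : forall i v, dotp (p i) v <= gauge B v.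
  move=> i v; apply: le_trans (hp1 i v) _; rewrite lerBlDl; exact: gD.
have hpz : forall i, dotp (p i) (z i) = gauge B (z i).
  move=> i; apply/le_anti; rewrite hsub /=.
  have := hp1 i (- z i); rewrite subrr (g0 hB) dotpNr; lra.
have hdual : forall i, z i != 0 -> dual_gauge B (p i) = 1.
  move=> i nz; have gz := g_pos hB nz.
  apply: (dual_eq1 (z := (gauge B (z i))^-1 *: z i)) => //.
    by rewrite (gZ hB) ?invr_gt0 // mulVf ?gt_eqF.
  by rewrite dotpZr hpz mulVf ?gt_eqF.
have hncone : forall i, z i != 0 -> Ncone B (p i) (z i).
  move=> i nz; have gz := g_pos hB nz.
  rewrite /Ncone hdual // asboolT //; exists (gauge B (z i)); exists ((gauge B (z i))^-1 *: z i).
    split; last by rewrite dotpZr hpz mulVf ?gt_eqF.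
    by rewrite /gball /= (gZ hB) ?invr_gt0 // mulVf ?gt_eqF.
  by split; [exact: ltW | rewrite scalerA divff ?gt_eqF // scale1r].
pose pi s := if [pick i | (i \notin C) && (a i == s)] is Some i then
               (if z i == 0 then 0 else p i) else 0.
have hpick : forall i, i \notin C -> pi (a i) = if z i == 0 then 0 else p i.
  move=> i iC; rewrite /pi; case: pickP => [j /andP [_ /eqP /ainj -> //]|].
  by move=> /(_ i); rewrite iC eqxx.
have hzi : forall i, i \notin C -> z i = x - a i.
  by move=> i iC; rewrite /z /pts (negbTE iC).
exists pi; split.
  move=> _ [i /= iC <-]; rewrite /dual_ball /= hpick //.
  by case: eqP => _; [rewrite dual0 ler01 | apply: dual_le1].
split.
  move=> _ [i /= iC <-]; rewrite hpick // -hzi //.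
  by case: eqP => [->|/eqP nz]; [exact: Ncone0_0 | exact: hncone].
have [[i0 i0C z0]|nz] := pselect (exists2 i, i \notin C & z i = 0).
  apply: (bnd_of (M := `|a i0|)) => y hy.
  have := hy (a i0) (ltac:(by exists i0)); rewrite hpick // z0 eqxx => /(Ncone0 (B:=B)) /eqP.
  by rewrite subr_eq0 => /eqP ->.
have nzi : forall i, i \notin C -> z i != 0.
  by move=> i iC; apply/eqP => e; apply: nz; exists i.
have hPp : forall i v, dotp (P i) v = w i * dotp (p i) v.
  by move=> i v; rewrite /p dotpZl mulrA divff ?gt_eqF // mul1r.
pose K1 := \sum_(i | i \notin C) dotp (P i) (a i).
pose K2 := \sum_(i | i \notin C) w i * gauge B (a i).
pose wC := \sum_(i in C) w i.
pose wD := \sum_(i | i \notin C) w i.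
pose sig := skewness B.
have wC0 : 0 <= wC by apply: sumr_ge0 => i _; exact: ltW.
have wDE : wD = 1 - wC by rewrite -hw1 (bigID (mem C)) /= addrC addrK.
have s0 : 0 < 1 + sig.
  rewrite ltNge; apply/negP => hs; move: hC; rewrite -/wC -/sig.
  have : 1 / (1 + sig) <= 0 by rewrite div1r invr_le0.
  lra.
have dpos : 0 < 1 - wC * (1 + sig).
  by move: hC; rewrite -/wC -/sig ltr_pdivlMr // => h; lra.
case: (norm_le_g hB) => M M0 hM.
apply: (bnd_of (M := M * ((K2 - K1) / (1 - wC * (1 + sig))))) => y hy.
have hyi : forall i, i \notin C -> gauge B (y - a i) <= dotp (p i) (y - a i).
  move=> i iC; apply: (ncone_le hB); first exact: hdual (nzi i iC).
  by have := hy (a i) (ltac:(by exists i)); rewrite hpick // (negbTE (nzi i iC)).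
have S1 : \sum_(i | i \notin C) w i * gauge B (y - a i) <= \sum_(i | i \notin C) dotp (P i) y - K1.
  rewrite /K1 -sumrB; apply: ler_sum => i iC.
  by rewrite -dotpBr hPp ler_wpM2l ?(ltW (hw i)) // hyi.
have S3 : \sum_(i | i \notin C) dotp (P i) y = - \sum_(i in C) dotp (P i) y.
  by have := hP2 y; rewrite (bigID (mem C)) /=; lra.
have S4 : - \sum_(i in C) dotp (P i) y <= wC * gauge B (- y).
  rewrite -sumrN /wC mulr_suml; apply: ler_sum => i _.
  by rewrite -dotpNr hPp ler_wpM2l ?(ltW (hw i)) // hsub.
have S5 : wC * gauge B (- y) <= wC * (sig * gauge B y) by rewrite ler_wpM2l // g_skew.
have S6 : wD * gauge B y - K2 <= \sum_(i | i \notin C) w i * gauge B (y - a i).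
  rewrite /wD /K2 mulr_suml -sumrB; apply: ler_sum => i _.
  rewrite -mulrBr ler_wpM2l ?(ltW (hw i)) // lerBlDr; exact: g_tri.
have e : (1 - wC * (1 + sig)) * gauge B y = wD * gauge B y - wC * (sig * gauge B y).
  by rewrite wDE; ring.
have hg : gauge B y <= (K2 - K1) / (1 - wC * (1 + sig)).
  by rewrite ler_pdivlMr // mulrC e; lra.
apply: le_trans (hM y) _; rewrite ler_wpM2l ?(ltW M0) //.
Qed.
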